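(* Fix a history of blocks $H$, and let $r\ge 0$ be the EIP-1559 burning fee per unit of size for the current slot. Consider the Double TFM with all transactions of the same size $s>0$. Assume (i) users cannot overbid, i.e. every bid $(\delta^{CM}_t,\delta^{BP}_t,c_t)$ satisfies $c_t\le v_t$; (ii) the burning fee is not excessively low, i.e. the total size of all transactions $t$ in the mempool with $v_t\ge r$ does not exceed the block capacity; and (iii) every includer and the block producer (of every type) follow the indicated allocation rules and add no fake transactions. Then for every user with value $v_t$, the bid $$b_t=(\delta^{CM}_t,\delta^{BP}_t,c_t)=\bigl(0,\ \mu^{Cost}_{BP},\ \min\{v_t,\ r+\mu^{Cost}_{BP}\}\bigr)$$ is a dominant strategy (it maximizes the user's utility for every choice of the other users' bids), irrespective of the user's beliefs about the other parties.
   Context: Model: in one slot there are users, $m$ includers with distinct orders $1,\dots,m$ (order $1$ is best), and one block producer. Each user has a transaction $t$ of size $s$ with private value $v_t$ per unit of size. An includer chooses an inclusion list (at most $c_{Incl}$ transactions) from the mempool; the block producer, seeing the inclusion lists, builds a block (at most $c_{block}$ transactions). Every transaction in the block pays the burning fee $r\cdot s$. The block producer incurs a cost $\mu^{Cost}_{BP}\ge 0$ per unit of size for every user transaction in its block; each includer incurs a cost $\mu^{Cost}_{CM}\ge0$ per unit of size for every user transaction in its list. Double TFM: a bid is $b_t=(\delta^{CM}_t,\delta^{BP}_t,c_t)$, where $c_t$ is the maximum total amount per unit of size the user pays. The block producer fee of $t$ is $\max\{\min\{\delta^{BP}_t s,\ c_t s-rs\},0\}$, paid to the block producer whenever $t$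 is in the block. The committee fee of $t$ is $\max\{\min\{\delta^{CM}_t s,\ c_t s-rs-\min\{\delta^{BP}_t s, c_t s-rs\}\},0\}$, paid entirely to the includer of smallest order that put $t$ in its inclusion list, and only if $t$ is in the block (otherwise not paid). A user whose transaction is in the (approved) block gets utility $(v_t - r)s$ minus the fees paid; otherwise utility $0$. Indicated allocation rules. Block producer: among transactions with $c_t\ge r+\mu^{Cost}_{BP}$ and $\delta^{BP}_t\ge \mu^{Cost}_{BP}$, include those with the highest block producer fee (deterministic tie-breaking) until the block is full or none remain. Includer of order $j$: compute the set $S$ of transactions the block producer following its rule would include; discard from $S$ transactions whose committee fee is below $\mu^{Cost}_{CM} s$; sort the rest by committee fee in decreasing order (deterministic tie-breaking); includers of order $1,2,\dots$ successively take the next $c_{Incl}$ transactions, and includer $j$ includes its block of positions $(j-1)c_{Incl}+1,\dots,j c_{Incl}$. *)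

(* Defs.v *)
From HB Require Import structures.
From mathcomp Require Import all_boot all_order all_algebra.
Set Implicit Arguments. Unset Strict Implicit. Unset Printing Implicit Defensive.
Import Order.TTheory GRing.Theory Num.Theory.
Local Open Scope ring_scope.

(* A bid (delta^CM, delta^BP, c), all per unit of size. *)
Record bid (R : realFieldType) := Bid { dCM : R; dBP : R; cap : R }.

Section DoubleTFM.
Variable R : realFieldType.

Definition bp_fee (r s : R) (b : bid R) : R :=
  Num.max (Num.min (dBP b * s) (cap b * s - r * s)) 0.

Definition cm_fee (r s : R) (b : bid R) : R :=
  Num.max (Num.min (dCM b * s)
     (cap b * s - r * s - Num.min (dBP b * s) (cap b * s - r * s))) 0.

Variable n : nat.

Definition bp_eligible (r muBP : R) (b : 'I_n -> bid R) : {set 'I_n} :=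
  [set t | (r + muBP <= cap (b t)) && (muBP <= dBP (b t))].

Definition bp_rule (r s muBP : R) (cblock : nat) (b : 'I_n -> bid R)
    (B : {set 'I_n}) : Prop :=
  exists srt : seq 'I_n,
    [/\ perm_eq srt (enum (bp_eligible r muBP b)),
        sorted (fun x y => bp_fee r s (b y) <= bp_fee r s (b x)) srt
      & B = [set x in take cblock srt]].

(* L : 'I_m -> {set 'I_n} are the inclusion lists produced by the includers
   (index j : 'I_m is the includer of order j+1) following the indicated
   rule, where S is the set the block producer would include. *)
Definition incl_rule (r s muCM : R) (m cIncl : nat) (b : 'I_n -> bid R)
    (S : {set 'I_n}) (L : 'I_m -> {set 'I_n}) : Prop :=
  exists srt : seq 'I_n,
    [/\ perm_eq srt (enum [set t in S | muCM * s <= cm_fee r s (b t)]),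
        sorted (fun x y => cm_fee r s (b y) <= cm_fee r s (b x)) srt
      & forall j : 'I_m, L j = [set x in take cIncl (drop (j * cIncl) srt)]].

Definition utility (r s : R) (m : nat) (v : 'I_n -> R)
    (blk : ('I_n -> bid R) -> {set 'I_n})
    (incl : ('I_n -> bid R) -> 'I_m -> {set 'I_n})
    (b : 'I_n -> bid R) (i : 'I_n) : R :=
  if i \in blk b then
    (v i - r) * s - bp_fee r s (b i)
      - (if [exists j, i \in incl b j] then cm_fee r s (b i) else 0)
  else 0.

Definition upd (b : 'I_n -> bid R) (i : 'I_n) (x : bid R) : 'I_n -> bid R :=
  fun t => if t == i then x else b t.

End DoubleTFM.

(* Main.v *)
Require Import Defs.
From HB Require Import structures.
From mathcomp Require Import all_boot all_order all_algebra.
From mathcomp Require Import lra.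
Import Order.TTheory GRing.Theory Num.Theory.
Local Open Scope ring_scope.
Set Implicit Arguments.

Lemma blk_sub (R : realFieldType) n (r s muBP : R) cblock (b : 'I_n -> bid R) B x :
  bp_rule r s muBP cblock b B -> x \in B -> x \in bp_eligible r muBP b.
Proof.
case=> srt [hp _ ->]; rewrite inE => /mem_take.
by rewrite (perm_mem hp) mem_enum.
Qed.

Lemma blk_full (R : realFieldType) n (r s muBP : R) cblock (b : 'I_n -> bid R) B x :
  bp_rule r s muBP cblock b B -> (#|bp_eligible r muBP b| <= cblock)%N ->
  x \in bp_eligible r muBP b -> x \in B.
Proof.
case=> srt [hp _ ->] hc hx; rewrite inE take_oversize.
  by rewrite (perm_mem hp) mem_enum.
by rewrite (perm_size hp) -cardE.
Qed.

Theorem mainTheorem1 (R : realFieldType) (n m cIncl cblock : nat)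
    (r s muBP muCM : R) (v : 'I_n -> R)
    (blk : ('I_n -> bid R) -> {set 'I_n})
    (incl : ('I_n -> bid R) -> 'I_m -> {set 'I_n}) :
  0 <= r -> 0 < s -> 0 <= muBP -> 0 <= muCM ->
  (* (ii) burning fee not excessively low *)
  (#|[set t | r <= v t]|%:R * s <= cblock%:R * s) ->
  (* (iii) block producer and includers follow the indicated rules *)
  (forall b, bp_rule r s muBP cblock b (blk b)) ->
  (forall b, incl_rule r s muCM cIncl b (blk b) (incl b)) ->
  forall (i : 'I_n) (b : 'I_n -> bid R),
  (* (i) other users cannot overbid *)
  (forall t, t != i -> cap (b t) <= v t) ->
  forall dev : bid R, cap dev <= v i ->
  utility r s v blk incl (upd b i dev) i
    <= utility r s v blk incl
         (upd b i (Bid 0 muBP (Num.min (v i) (r + muBP)))) i.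
Proof.
move=> r0 s0 mu0 _ hcap hbp _ i b hb dev hdev.
have hcb : (#|[set t | (r <= v t)%R]| <= cblock)%N.
  by rewrite -(ler_nat R) -(ler_pM2r s0).
have hel : forall c : 'I_n -> bid R, (forall t, cap (c t) <= v t) ->
    (#|bp_eligible r muBP c| <= cblock)%N.
  move=> c hc; apply: leq_trans hcb; apply: subset_leq_card.
  apply/subsetP => t; rewrite !inE => /andP[h _].
  apply: le_trans (hc t); apply: le_trans h; by rewrite lerDl.
set tr := Bid 0 muBP (Num.min (v i) (r + muBP)).
have hct : forall t, cap (upd b i tr t) <= v t.
  move=> t; rewrite /upd; case: eqP => [->|/eqP h]; last exact: hb.
  by rewrite /= ge_min lexx.
rewrite /utility.
case: (leP (r + muBP) (v i)) => hv.
- have hmin : Num.min (v i) (r + muBP) = r + muBP by apply/min_idPr.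
  have hi : i \in blk (upd b i tr).
    apply: (blk_full (hbp _)); first exact: hel.
    by rewrite inE /upd eqxx /= hmin !lexx.
  rewrite hi.
  have -> : bp_fee r s (upd b i tr i) = muBP * s.
    rewrite /bp_fee /upd eqxx /= hmin.
    have -> : (r + muBP) * s - r * s = muBP * s by rewrite mulrDl addrAC subrr add0r.
    rewrite minxx; apply/max_idPl; by rewrite mulr_ge0 // ltW.
  have -> : cm_fee r s (upd b i tr i) = 0.
    rewrite /cm_fee /upd eqxx /= mul0r hmin.
    have -> : (r + muBP) * s - r * s = muBP * s by rewrite mulrDl addrAC subrr add0r.
    by rewrite minxx subrr minxx maxxx.
  rewrite if_same subr0.
  case: ifP => hid; last first.
    by rewrite subr_ge0 ler_pM2r // lerBrDl.
  have := blk_sub (hbp _) hid; rewrite inE /upd eqxx => /andP[h1 h2].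
  have hbf : muBP * s <= bp_fee r s dev.
    rewrite /bp_fee le_max le_min; apply/orP; left; apply/andP; split.
      by rewrite ler_pM2r.
    by rewrite -mulrBl ler_pM2r // lerBrDl.
  have hcm : 0 <= (if [exists j, i \in incl (upd b i dev) j]
                   then cm_fee r s (upd b i dev i) else 0).
    case: ifP => // _; by rewrite /cm_fee le_max lexx orbT.
  rewrite /upd eqxx in hcm *.
  move: hbf hcm.
  set X := (if _ then _ else _) => hbf hcm.
  lra.
- have hmin : Num.min (v i) (r + muBP) = v i by apply/min_idPl; exact: ltW.
  have -> : (i \in blk (upd b i tr)) = false.
    apply/negbTE/negP => /(blk_sub (hbp _)); rewrite inE /upd eqxx /= hmin.
    by rewrite leNgt hv.
  have -> : (i \in blk (upd b i dev)) = false.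
    apply/negbTE/negP => /(blk_sub (hbp _)); rewrite inE /upd eqxx /=.
    move=> /andP[h _]; have := le_trans h hdev; by rewrite leNgt hv.
  done.
Qed.
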